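(* Let $(X,\to)$ be a transition system over $A$. For every preorder $R\in\mathit{Pre}(X)$ and $x_1,x_2\in X$: $(x_1,x_2)\in\beta_s(R)$ iff for all $a\in A$ and all $y_1\in\delta_a(x_1)$ there exists $y_2\in\delta_a(x_2)$ with $y_1\mathrel Ry_2$. Moreover, if the transition system is finitely branching, $\beta_s$ is continuous on $(\mathit{Pre}(X),\supseteq)$.
   Context: A transition system over $A$: $(X,\to)$ with $\to\subseteq X\times A\times X$; $\delta_a(x)=\{x'\mid x\xrightarrow{a}x'\}$; finitely branching means $\{(a,x')\mid x\xrightarrow{a}x'\}$ is finite for all $x$. $\mathit{Pre}(X)$ is the set of preorders on $X$, ordered by $\supseteq$; continuity means preserving suprema of well-ordered chains in this order (i.e. intersections of descending chains). $\Diamond_a(S)=\{x\mid\exists x'\in S\colon x\xrightarrow{a}x'\}$. $\alpha_s(\mathcal S)=\{(x_1,x_2)\mid\forall S\in\mathcal S\colon(x_1\in S\Rightarrow x_2\in S)\}$ for $\mathcal S\subseteq\mathcal P(X)$; $\gamma_s(R)=\{S\subseteq X\mid\forall s\in S\colon R[\{s\}]\subseteq S\}$ where $R[\{s\}]=\{y\mid (s,y)\in R\}$; $\mathit{lo}_s(\mathcal S)=\bigcup_{a\in A}\{\Diamond_a(S)\mid S\in\mathrm{cl}^\cap_f(\mathcal S)\}$, with $\mathrm{cl}^\cap_f$ the closure under finite intersections (including the empty intersection $X$); $\beta_s=\alpha_s\circ\mathit{lo}_s\circ\gamma_s$. *)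

(* Defs.v *)
From Stdlib Require Import List.
Import ListNotations.

Set Implicit Arguments.

(* A transition system over A on states X: trans x a x' means x --a--> x'. *)
Definition lts (X A : Type) := X -> A -> X -> Prop.

Section Defs.
Variables (X A : Type) (trans : lts X A).

Definition delta (a : A) (x : X) : X -> Prop := fun x' => trans x a x'.

Definition finitely_branching : Prop :=
  forall x, exists l : list (A * X),
    forall a x', trans x a x' <-> In (a, x') l.

Definition is_preorder (R : X -> X -> Prop) : Prop :=
  (forall x, R x x) /\ (forall x y z, R x y -> R y z -> R x z).

Definition Diamond (a : A) (S : X -> Prop) : X -> Prop :=
  fun x => exists x', S x' /\ trans x a x'.

Definition alpha_s (SS : (X -> Prop) -> Prop) : X -> X -> Prop :=
  fun x1 x2 => forall S, SS S -> S x1 -> S x2.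

Definition gamma_s (R : X -> X -> Prop) : (X -> Prop) -> Prop :=
  fun S => forall s, S s -> forall y, R s y -> S y.

(* closure under finite intersections (the empty intersection being X) *)
Definition cl_fin_inter (SS : (X -> Prop) -> Prop) : (X -> Prop) -> Prop :=
  fun S => exists l : list (X -> Prop),
    (forall T, In T l -> SS T) /\ S = (fun x => forall T, In T l -> T x).

Definition lo_s (SS : (X -> Prop) -> Prop) : (X -> Prop) -> Prop :=
  fun T => exists a S, cl_fin_inter SS S /\ T = Diamond a S.

Definition beta_s (R : X -> X -> Prop) : X -> X -> Prop :=
  alpha_s (lo_s (gamma_s R)).

End Defs.

(* Intersection of a family of relations (supremum in (Pre(X), ⊇)). *)
Definition rel_inter (X : Type) (C : (X -> X -> Prop) -> Prop) : X -> X -> Prop :=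
  fun x y => forall R, C R -> R x y.

Definition rel_sub (X : Type) (R S : X -> X -> Prop) : Prop :=
  forall x y, R x y -> S x y.

(* A nonempty well-ordered chain in (Pre(X), ⊇): a nonempty family of
   preorders, totally ordered by inclusion, such that every nonempty
   subfamily has a ⊇-least element (i.e. a member containing all others). *)
Definition wo_chain_Pre (X : Type) (C : (X -> X -> Prop) -> Prop) : Prop :=
  (forall R, C R -> is_preorder R) /\
  (exists R, C R) /\
  (forall R S, C R -> C S -> rel_sub R S \/ rel_sub S R) /\
  (forall D : (X -> X -> Prop) -> Prop,
     (forall R, D R -> C R) -> (exists R, D R) ->
     exists R0, D R0 /\ forall S, D S -> rel_sub S R0).

(* beta_s is continuous on (Pre(X), ⊇): it preserves suprema (= intersections)
   of nonempty well-ordered chains. *)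
Definition beta_s_continuous (X A : Type) (trans : lts X A) : Prop :=
  forall C : (X -> X -> Prop) -> Prop, wo_chain_Pre C ->
    forall x1 x2,
      beta_s trans (rel_inter C) x1 x2 <->
      rel_inter (fun T => exists R, C R /\ T = beta_s trans R) x1 x2.

(* Main.v *)
Require Import Defs.
From Stdlib Require Import List.
From Stdlib Require Import Classical.
Import ListNotations.

Lemma part1 (X A : Type) (trans : lts X A) :
  forall R : X -> X -> Prop, is_preorder R ->
     forall x1 x2 : X,
       beta_s trans R x1 x2 <->
       (forall (a : A) (y1 : X), delta trans a x1 y1 ->
          exists y2, delta trans a x2 y2 /\ R y1 y2).
Proof.
  intros R [Hr Ht] x1 x2; split.
  - intros H a y1 Hy1.
    set (S := fun x => forall T, In T [R y1] -> T x).
    assert (HD : Diamond trans a S x2).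
    { apply H.
      - exists a, S; split; [|reflexivity].
        exists [R y1]; split; [|reflexivity].
        intros T [<-|[]]. intros s Hs y Hy. eauto.
      - exists y1; split; [|exact Hy1].
        intros T [<-|[]]. apply Hr. }
    destruct HD as [y2 [HS Hy2]]. exists y2; split; [exact Hy2|].
    apply HS; left; reflexivity.
  - intros H T [a [S [[l [Hl ->]] ->]]] [x' [HS Hx']].
    destruct (H a x' Hx') as [y2 [Hy2 Hr2]].
    exists y2; split; [|exact Hy2].
    intros T HT. apply (Hl T HT x'); auto.
    apply HS; auto.
Qed.

Theorem mainTheorem7 (X A : Type) (trans : lts X A) :
  (forall R : X -> X -> Prop, is_preorder R ->
     forall x1 x2 : X,
       beta_s trans R x1 x2 <->
       (forall (a : A) (y1 : X), delta trans a x1 y1 ->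
          exists y2, delta trans a x2 y2 /\ R y1 y2)) /\
  (finitely_branching trans -> beta_s_continuous trans).
Proof.
  split; [apply part1|].
  intros Hfb C [Hpre [Hne [Hch _]]] x1 x2.
  assert (Hip : is_preorder (rel_inter C)).
  { split.
    - intros x R HR. apply (proj1 (Hpre R HR)).
    - intros x y z H1 H2 R HR. apply (proj2 (Hpre R HR)) with y; [apply H1|apply H2]; exact HR. }
  rewrite (part1 X A trans _ Hip). split.
  - intros H T [R [HR ->]].
    apply (part1 X A trans _ (Hpre R HR)).
    intros a y1 Hy1. destruct (H a y1 Hy1) as [y2 [Hy2 Hr]].
    exists y2; split; [exact Hy2|apply Hr; exact HR].
  - intros H a y1 Hy1.
    assert (HRall : forall R, C R -> exists y2, delta trans a x2 y2 /\ R y1 y2).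
    { intros R HR. apply (proj1 (part1 X A trans _ (Hpre R HR) x1 x2)); auto.
      apply H. exists R; auto. }
    destruct (Hfb x2) as [l Hl].
    assert (P : (exists y2, In (a,y2) l /\ forall R, C R -> R y1 y2) \/
                (exists R, C R /\ forall y2, In (a,y2) l -> ~ R y1 y2)).
    { clear Hl. induction l as [|[b z] l IH].
      - right. destruct Hne as [R HR]. exists R; split; [exact HR|intros y2 []].
      - destruct IH as [[y2 [Hin Hall]]|[R [HRc HRn]]].
        + left. exists y2; split; auto. right; auto.
        + destruct (classic (b = a /\ forall R, C R -> R y1 z)) as [[-> Q]|NQ].
          * left. exists z; split; auto. left; auto.
          * destruct (classic (b = a)) as [Eb|Nb].
            -- assert (exists R', C R' /\ ~ R' y1 z) as [R' [HR' NR']].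
               { apply NNPP; intro K. apply NQ; split; auto.
                 intros R0 HR0. apply NNPP; intro K2. apply K; eauto. }
               subst b.
               destruct (Hch R R' HRc HR') as [S1|S2].
               ++ right; exists R; split; auto.
                  intros y2 [E|Hin] Hr.
                  ** inversion E; subst. apply NR'; apply S1; exact Hr.
                  ** apply (HRn y2 Hin Hr).
               ++ right; exists R'; split; auto.
                  intros y2 [E|Hin] Hr.
                  ** inversion E; subst. exact (NR' Hr).
                  ** apply (HRn y2 Hin); apply S2; exact Hr.
            -- right; exists R; split; auto.
               intros y2 [E|Hin]; [inversion E; congruence|auto]. }
    destruct P as [[y2 [Hin Hall]]|[R [HRc HRn]]].
    + exists y2; split; [apply Hl; auto|]. intros R HR'; apply Hall; exact HR'.
    + destruct (HRall R HRc) as [y2 [Hy2 Hr]].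
      exfalso. apply (HRn y2); auto. apply Hl; auto.
Qed.
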